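(* For an integer $n$ and real $x$, define $$S_n(x)=(18n+24)\sin(x)-(9n+27)\sin((n+1)x)+9n\sin((n+2)x)+2\sin(4x)-\sin(5x)$$ and $$L_n(x)=(18n+24)\sin(x)-18n\sin(x/2)-29.1.$$ Then for all integers $n\geq 21$ and all $x\in(0,2\pi/3)$, $S_n(x)>L_n(x)$. *)

(* Defs.v *)
From Stdlib Require Import Reals Lra Lia.
Open Scope R_scope.

Definition S_n (n : nat) (x : R) : R :=
  (18 * INR n + 24) * sin x - (9 * INR n + 27) * sin ((INR n + 1) * x)
  + 9 * INR n * sin ((INR n + 2) * x) + 2 * sin (4 * x) - sin (5 * x).

Definition L_n (n : nat) (x : R) : R :=
  (18 * INR n + 24) * sin x - 18 * INR n * sin (x / 2) - 291 / 10.

(* Main.v *)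
Require Import Defs.
From Stdlib Require Import Reals.
From Stdlib Require Import Lra Psatz.
Open Scope R_scope.

Lemma core (s t u v F : R) : 0 < s -> 1/2 < t -> s*s+t*t = 1 -> u*u+v*v=1 ->
  -3 <= F -> -20*s <= F ->
  378*s*(1+v) + 27*s*v - 27*t*u + F + 291/10 > 0.
Proof. intros hs ht hst huv h3 h20.
  set (B := -27*s + F + 291/10).
  assert (hs1 : s*s < 3/4) by nra.
  assert (hs2 : s < 87/100) by nra.
  assert (hB : B > 0) by (unfold B; lra).
  assert (hB2 : B*B + 810*B*s > 729).
  { destruct (Rle_lt_dec s (15/100)).
    - assert (B >= 291/10 - 47*s) by (unfold B; lra). nra.
    - assert (B >= 261/10 - 27*s) by (unfold B; lra). nra. }
  assert (hv : -1 <= v <= 1) by nra.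
  set (A := B + 405*s*(1+v)).
  assert (hA : A > 0) by (unfold A; nra).
  assert (hA2 : A*A > 729*(u*u)).
  { replace (u*u) with (1 - v*v) by lra.
    set (w := 1+v).
    replace (A*A - 0) with (A*A) by ring.
    assert (E: A*A - 729*(1-v*v) = (405*405*s*s+729)*w*w + (810*B*s - 1458)*w + B*B)
      by (unfold A, w; ring).
    set (a := 405*405*s*s+729) in *. set (b := 810*B*s - 1458) in *.
    assert (ha : a > 0) by (unfold a; nra).
    assert (E2 : 4*a*(a*w*w + b*w + B*B) = (2*a*w+b)*(2*a*w+b) + (4*a*(B*B) - b*b)) by ring.
    assert (E3 : 4*a*(B*B) - b*b = 2916*(B*B + 810*B*s - 729)) by (unfold a, b; ring).
    assert (4*a*(a*w*w + b*w + B*B) > 0) by (rewrite E2, E3; assert (0 <= (2*a*w+b)*(2*a*w+b)) by apply Rle_0_sqr; lra).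
    assert (a*w*w + b*w + B*B > 0) by (apply (Rmult_lt_reg_l (4*a)); lra).
    lra. }
  assert (ht1 : t <= 1) by nra.
  assert (27*t*u < A) by nra.
  unfold A, B in *. lra.
Qed.

Lemma sin_lb3 a : 0 <= a -> a <= 4 -> a - a*a*a/6 <= sin a.
Proof.
intros H H0. destruct (pre_sin_bound a 0 H H0) as [h _].
unfold sin_approx, sin_term in h. simpl in h. lra.
Qed.

Theorem lemma3 : forall (n : nat) (x : R),
  (21 <= n)%nat -> 0 < x < 2 * PI / 3 -> S_n n x > L_n n x.
Proof.
  intros n x hn [hx0 hx1].
  assert (hN : 21 <= INR n) by (replace 21 with (INR 21) by (simpl; lra); apply le_INR; lia).
  pose proof PI2_3_2 as hpi1. pose proof PI_4 as hpi2.
  set (h := x/2). set (b := (INR n + 3/2)*x).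
  assert (e1 : (INR n + 1)*x = b - h) by (unfold b, h; field).
  assert (e2 : (INR n + 2)*x = b + h) by (unfold b, h; field).
  unfold S_n, L_n. rewrite e1, e2, sin_minus, sin_plus.
  fold h.
  set (s := sin h). set (t := cos h). set (u := sin b). set (v := cos b).
  set (F := 2 * sin (4*x) - sin (5*x)).
  assert (hst : s*s + t*t = 1) by (unfold s, t; pose proof (sin2_cos2 h); unfold Rsqr in *; lra).
  assert (huv : u*u + v*v = 1) by (unfold u, v; pose proof (sin2_cos2 b); unfold Rsqr in *; lra).
  assert (hs : 0 < s) by (unfold s, h; apply sin_gt_0; lra).
  assert (ht : 1/2 < t).
  { rewrite <- cos_PI3. unfold t, h. apply cos_decreasing_1; lra. }
  assert (hF3 : -3 <= F) by (unfold F; pose proof (SIN_bound (4*x)); pose proof (SIN_bound (5*x)); lra).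
  assert (hsx : x <= 4*s).
  { pose proof (sin_lb3 h) as H. unfold s. assert (h*h <= 3) by (unfold h; nra).
    assert (h - h*h*h/6 >= h/2) by (unfold h in *; nra).
    unfold h in *; lra. }
  assert (hF20 : -20*s <= F).
  { destruct (Rle_lt_dec x (6/10)).
    - assert (0 <= sin (4*x)) by (apply sin_ge_0; lra).
      assert (sin (5*x) < 5*x) by (apply sin_lt_x; lra).
      unfold F; lra.
    - lra. }
  assert (hv : -1 <= v <= 1) by nra.
  assert (18 * INR n * s * (1+v) >= 378 * s * (1+v)).
  { assert (0 <= s*(1+v)) by nra. nra. }
  pose proof (core s t u v F hs ht hst huv hF3 hF20).
  unfold F in *. nra.
Qed.
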